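(* Let $n\ge1$, $1\le s\le n$, $A_1,\dots,A_s\subset\mathbb Z^n$ finite, $m_1+\dots+m_s=n$ nonnegative integers, let $b$ be a lifting in general position, let $F_0\subset\cdots\subset F_n=\mathbb R^n$ be a generic affine flag, let $(m_i(d))_{d}$ be sequences as in the context, and let $1\le d\le n$. Let $\boldsymbol\xi$ be a vertex of $X'_d$, and let $q\in\{1,\dots,s\}$ be the unique index with $m_q(\boldsymbol\xi)=m_q(d-1)+1$. Then there are exactly $m_q(\boldsymbol\xi)+1=m_q(d-1)+2$ edges of $X'_d$ having $\boldsymbol\xi$ as an endpoint. Moreover, these edges can be written as $\{\boldsymbol\xi+t\,\Delta_j\boldsymbol\xi: t\in(0,I_j)\}$, $j=1,\dots,m_q(\boldsymbol\xi)+1$, where each $\Delta_j\boldsymbol\xi\in\mathbb R^n$ and each $I_j$ is either a strictly positive real number or $+\infty$, and the balancing condition $\sum_j \Delta_j\boldsymbol\xi=0$ holds.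
   Context: A lifting is a function $b:A_1\sqcup\cdots\sqcup A_s\to\mathbb R$, written $b(i,\mathbf a)$. It is in general position if for every subset $S$ of $\{[-\mathrm e_i,\mathbf a,b(i,\mathbf a)]:\mathbf a\in A_i\}\subset\mathbb R^s\times\mathbb R^n\times\mathbb R$ of cardinality at most $n+s+1$, either the vectors of $S$ are linearly independent or $[0,\dots,0,1]$ is a linear combination of them. For $\boldsymbol\xi\in(\mathbb R^n)^*$, $\lambda_i(\boldsymbol\xi)=\max_{\mathbf a\in A_i}(\boldsymbol\xi(\mathbf a)-b(i,\mathbf a))$, and $m_i(\boldsymbol\xi)+1$ is the number of $\mathbf a\in A_i$ attaining it; these pairs $(i,\mathbf a)$ are the active constraints at $\boldsymbol\xi$. The flag consists of affine subspaces with $\dim F_d=d$. For each $i$, $(m_i(d))_{d=0,\dots,n}$ is non-decreasing in $\mathbb N_0$ with $m_i(0)=0$, $m_i(n)=m_i$, $\sum_i m_i(d)=d$. $X'_d=\{\boldsymbol\xi\in F_d: m_i(\boldsymbol\xi)\ge m_i(d-1)\ \forall i\}$. A vertex of $X'_d$ is a point $\boldsymbol\xi\in X'_d$ with $\sum_i m_i(\boldsymbol\xi)=d$. An edge of $X'_d$ is a one-dimensional set of the form $\{\boldsymbol\eta\in F_d:\ \text{the set of active constraints at }\boldsymbol\eta\text{ equals }W\}$, where $W$ contains exactly $m_i(d-1)+1$ elements of each $A_i$. *)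

(* Defs.v *)
From HB Require Import structures.
From mathcomp Require Import all_boot all_order all_algebra.
From mathcomp Require Import reals.
From mathcomp Require Import mpoly.
Set Implicit Arguments. Unset Strict Implicit. Unset Printing Implicit Defensive.
Import Order.TTheory GRing.Theory Num.Theory.
Local Open Scope ring_scope.

Section Tropical.
Variables (R : realType) (n s : nat).
Variables (A : 'I_s -> seq 'rV[int]_n) (b : 'I_s -> 'rV[int]_n -> R).

(* xi(a) for xi in (R^n)^* identified with row vectors *)
Definition pairing (xi : 'rV[R]_n) (a : 'rV[int]_n) : R :=
  \sum_(j < n) xi 0 j * (a 0 j)%:~R.

Definition objval (xi : 'rV[R]_n) (i : 'I_s) (a : 'rV[int]_n) : R :=
  pairing xi a - b i a.

Definition active (xi : 'rV[R]_n) (i : 'I_s) (a : 'rV[int]_n) : bool :=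
  (a \in A i) && all (fun a' => objval xi i a' <= objval xi i a) (A i).

Definition mult (xi : 'rV[R]_n) (i : 'I_s) : nat :=
  (count (active xi i) (A i)).-1.

Definition lift_vec (i : 'I_s) (a : 'rV[int]_n) : 'rV[R]_(s + n + 1) :=
  row_mx (row_mx (- delta_mx (0 : 'I_1) i) (map_mx (fun z : int => z%:~R) a))
         ((b i a)%:M : 'M[R]_1).

Definition last_vec : 'rV[R]_(s + n + 1) := row_mx 0 (1%:M : 'M[R]_1).

Definition lin_indep (m : nat) (vs : seq 'rV[R]_m) : Prop :=
  forall c : 'I_(size vs) -> R,
    \sum_(k < size vs) c k *: vs`_k = 0 -> forall k, c k = 0.

Definition in_span (m : nat) (vs : seq 'rV[R]_m) (v : 'rV[R]_m) : Prop :=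
  exists c : 'I_(size vs) -> R, \sum_(k < size vs) c k *: vs`_k = v.

Definition general_position : Prop :=
  forall S : seq ('I_s * 'rV[int]_n),
    uniq S -> (forall x, x \in S -> x.2 \in A x.1) ->
    (size S <= n + s + 1)%N ->
    lin_indep [seq lift_vec x.1 x.2 | x <- S] \/
    in_span [seq lift_vec x.1 x.2 | x <- S] last_vec.

Definition valid_mseq (mm : 'I_s -> nat) (ms : 'I_s -> nat -> nat) : Prop :=
  (forall i, ms i 0 = 0%N /\ ms i n = mm i /\
             forall d, (d < n)%N -> (ms i d <= ms i d.+1)%N) /\
  (forall d, (d <= n)%N -> (\sum_(i < s) ms i d)%N = d).

(* The affine flag F_d = p + span(row_0 M, ..., row_{d-1} M), M invertible *)
Variables (p : 'rV[R]_n) (M : 'M[R]_n).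

Definition in_flag (d : nat) (eta : 'rV[R]_n) : Prop :=
  exists c : 'I_n -> R, eta = p + \sum_(j < n | (j < d)%N) c j *: row j M.

Variable ms : 'I_s -> nat -> nat.

Definition in_Xp (d : nat) (xi : 'rV[R]_n) : Prop :=
  in_flag d xi /\ forall i, (ms i d.-1 <= mult xi i)%N.

Definition is_vertex (d : nat) (xi : 'rV[R]_n) : Prop :=
  in_Xp d xi /\ (\sum_(i < s) mult xi i)%N = d.

Definition one_dim (E : 'rV[R]_n -> Prop) : Prop :=
  (exists (x0 v : 'rV[R]_n), forall eta, E eta -> exists t : R, eta = x0 + t *: v) /\
  (exists e1 e2, E e1 /\ E e2 /\ e1 <> e2).

Definition is_edge (d : nat) (E : 'rV[R]_n -> Prop) : Prop :=
  one_dim E /\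
  exists W : 'I_s -> pred 'rV[int]_n,
    (forall i a, W i a -> a \in A i) /\
    (forall i, count (W i) (A i) = (ms i d.-1).+1) /\
    (forall eta, E eta <-> (in_flag d eta /\ forall i a, active eta i a = W i a)).

Definition endpoint (xi : 'rV[R]_n) (E : 'rV[R]_n -> Prop) : Prop :=
  ~ E xi /\
  forall eps : R, 0 < eps ->
    exists eta, E eta /\ \sum_(j < n) (eta 0 j - xi 0 j) ^+ 2 < eps.

End Tropical.

(* {xi + t Delta : t in (0, I)}, with I = None standing for +infinity *)
Definition ray (R : realType) (n : nat) (xi D : 'rV[R]_n) (I : option R)
  (eta : 'rV[R]_n) : Prop :=
  exists t : R, 0 < t /\ (if I is Some r then t < r else True) /\ eta = xi + t *: D.

Definition flag_coords (R : realType) (n : nat) (p : 'rV[R]_n) (M : 'M[R]_n) :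
  'I_(n + n * n) -> R :=
  fun k => match split k with inl j => p 0 j | inr l => mxvec M 0 l end.

(* Main.v *)
Require Import Defs.
From HB Require Import structures.
From mathcomp Require Import all_boot all_order all_algebra.
From mathcomp Require Import reals.
From mathcomp Require Import mpoly.
From mathcomp Require Import lra zify.
Set Implicit Arguments. Unset Strict Implicit. Unset Printing Implicit Defensive.
Import Order.TTheory GRing.Theory Num.Theory.
Local Open Scope ring_scope.

Section Poly.
Variables (R : realType) (n : nat) (pts : seq 'rV[int]_n).
Local Notation Np := (size pts).+1.

Definition cfgD (d : nat) (f : {ffun 'I_n -> 'I_Np * 'I_Np}) : 'M[R]_n :=
  \matrix_(k, c) (if (k < d)%N then ((pts`_(f k).1 - pts`_(f k).2) 0 c)%:~R else 0).

Definition Jd (d : nat) : 'M[R]_n := diag_mx (\row_k ((d <= k)%N)%:R).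

Definition Hm d f (M : 'M[R]_n) : 'M[R]_n := cfgD d f *m M^T + Jd d.

Definition Qp d f : {mpoly R[n + n * n]} :=
  \det (\matrix_(k, l) (\sum_(c < n) (cfgD d f k c)%:MP * 'X_(rshift n (mxvec_index l c))
       + (Jd d k l)%:MP)).

Lemma Qp_eval d f (p : 'rV[R]_n) M : (Qp d f).@[flag_coords p M] = \det (Hm d f M).
Proof.
rewrite /Qp -det_map_mx; congr (\det _); apply/matrixP => k l.
rewrite !mxE rmorphD /= mevalC rmorph_sum /=; congr (_ + _).
apply: eq_bigr => c _; rewrite mevalM mevalC mevalXU /flag_coords.
have -> : split (rshift n (mxvec_index l c)) = inr (mxvec_index l c) :=
  unsplitK (inr _ : 'I_n + 'I_(n * n)).
by rewrite mxvecE !mxE.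
Qed.

Definition fac d f : {mpoly R[n + n * n]} := if Qp d f != 0 then Qp d f else 1.

Definition Ppoly : {mpoly R[n + n * n]} :=
  \prod_(d < n.+1) \prod_(f : {ffun 'I_n -> 'I_Np * 'I_Np}) fac d f.

Lemma Ppoly_neq0 : Ppoly != 0.
Proof.
rewrite /Ppoly; apply/prodf_neq0 => d _; apply/prodf_neq0 => f _.
rewrite /fac; case: ifP => // _; exact: oner_neq0.
Qed.

Lemma Ppoly_eval (p : 'rV[R]_n) M (d : 'I_n.+1) f :
  Ppoly.@[flag_coords p M] != 0 -> Qp d f != 0 -> \det (Hm d f M) != 0.
Proof.
rewrite /Ppoly rmorph_prod /= => /prodf_neq0 /(_ d isT).
rewrite rmorph_prod /= => /prodf_neq0 /(_ f isT).
by rewrite /fac => + Hq; rewrite Hq Qp_eval.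
Qed.


Lemma Qp_neq0 d f :
  (forall x : 'rV[R]_n, x *m cfgD d f = 0 -> forall k : 'I_n, (k < d)%N -> x 0 k = 0) ->
  Qp d f != 0.
Proof.
move=> Hind; apply/negP => /eqP Q0.
suff : \det (Hm d f (cfgD d f)) != 0 by rewrite -(Qp_eval d f 0) Q0 meval0 eqxx.
rewrite -unitfE -unitmxE -row_free_unit; apply: inj_row_free => x Hx.
set D := cfgD d f.
have E : (x *m Hm d f D *m x^T) 0 0 = 0 by rewrite Hx mul0mx mxE.
move: E; rewrite /Hm mulmxDr mulmxDl mulmxA -[x *m D *m D^T *m x^T]mulmxA -trmx_mul.
rewrite /Jd mul_mx_diag !mxE.
set y := x *m D.
under eq_bigr do rewrite !mxE.
under [X in _ + X]eq_bigr do rewrite !mxE.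
move/eqP; rewrite paddr_eq0; first last.
- apply: sumr_ge0 => k _; case: (d <= k)%N; rewrite ?mulr1 ?mulr0 ?mul0r //.
  by rewrite -expr2 sqr_ge0.
- by apply: sumr_ge0 => k _; rewrite -expr2 sqr_ge0.
case/andP => /eqP S1 /eqP S2.
have y0 : y = 0.
  apply/rowP => c; rewrite [RHS]mxE [LHS]mxE; apply/eqP; rewrite -sqrf_eq0 expr2; apply/eqP.
  apply: (psumr_eq0P _ S1) => // c' _; by rewrite -expr2 sqr_ge0.
apply/rowP => k; rewrite mxE.
case: (ltnP k d) => Hk; first exact: Hind.
have := psumr_eq0P _ S2 (i := k) isT.
rewrite Hk mulr1 => H; apply/eqP; rewrite -sqrf_eq0 expr2; apply/eqP; apply: H.
by move=> c _; case: (d <= c)%N; rewrite ?mulr1 ?mulr0 ?mul0r // -expr2 sqr_ge0.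
Qed.

End Poly.

Section Gen.
Variable R : realType.

Lemma exists_max (T : eqType) (l : seq T) (g : T -> R) :
  l != [::] -> exists2 a, a \in l & all (fun a' => g a' <= g a) l.
Proof.
elim: l => // x l IH _.
case: (altP (l =P [::])) => [-> | /IH [a al Ha]].
  by exists x; rewrite ?mem_seq1 //= lexx.
case: (leP (g x) (g a)) => H.
  exists a; first by rewrite in_cons al orbT.
  by rewrite /= H Ha.
exists x; first by rewrite mem_head.
rewrite /= lexx /=; apply/allP => y yl; apply: le_trans (ltW H).
exact: (allP Ha).
Qed.

Lemma count_sub_le (T : eqType) (l : seq T) (P Q : pred T) :
  {in l, forall x, P x -> Q x} -> (count P l <= count Q l)%N.
Proof.
elim: l => //= x l IH H.
have Hl : {in l, forall x, P x -> Q x} by move=> z zl; apply: H; rewrite in_cons zl orbT.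
have Hx := H x (mem_head _ _).
by apply: leq_add (IH Hl); case: (P x) Hx => //= ->.
Qed.

Lemma count_sub_eq (T : eqType) (l : seq T) (P Q : pred T) :
  {in l, forall x, P x -> Q x} -> count P l = count Q l -> {in l, forall x, Q x -> P x}.
Proof.
elim: l => // x l IH H /= E y.
have Hl : {in l, forall x, P x -> Q x} by move=> z zl; apply: H; rewrite in_cons zl orbT.
have Hx := H x (mem_head _ _).
have le1 := count_sub_le Hl.
rewrite in_cons => /orP [/eqP -> | yl].
  case: (P x) Hx E => //=; case: (Q x) => //= _ E; lia.
apply: (IH Hl) => //.
by case: (P x) Hx E => //=; case: (Q x) => //= Hx E; try lia; have := Hx isT.
Qed.

Lemma count1_eq (T : eqType) (l : seq T) (P : pred T) x y :
  count P l = 1%N -> x \in l -> P x -> y \in l -> P y -> x = y.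
Proof.
rewrite -size_filter => Hs xl Px yl Py.
have : x \in filter P l by rewrite mem_filter Px xl.
have : y \in filter P l by rewrite mem_filter Py yl.
by case: (filter P l) Hs => [|z [|]] //= _; rewrite !mem_seq1 => /eqP -> /eqP ->.
Qed.

Lemma sum_eq_excess (s : nat) (f g : 'I_s -> nat) q :
  (forall i, g i <= f i)%N -> f q = (g q).+1 ->
  (\sum_i f i = (\sum_i g i).+1)%N -> forall i, i != q -> f i = g i.
Proof.
move=> Hle Hq; rewrite (bigD1 q) //= [in RHS](bigD1 q) //= Hq addSn => /eqP.
rewrite eqSS eqn_add2l => /eqP E.
have : (\sum_(i | i != q) (f i - g i) == 0)%N.
  apply/eqP; apply/eqP; rewrite -(eqn_add2l (\sum_(i | i != q) g i)) addn0 -big_split /=.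
  by rewrite -E; apply/eqP; apply: eq_bigr => i _; rewrite subnKC.
rewrite sum_nat_eq0 => /forallP H i iq.
have := H i; rewrite iq /= subn_eq0 => Hi; apply/eqP; by rewrite eqn_leq Hi Hle.
Qed.

(* Ifun : the first time a linear constraint t * s < g is violated *)
Fixpoint Ifun (l : seq (R * R)) : option R :=
  match l with
  | [::] => None
  | x :: l' => if x.2 <= 0 then Ifun l' else
      Some (match Ifun l' with None => x.1 / x.2 | Some r => Num.min r (x.1 / x.2) end)
  end.

Definition below (t : R) (o : option R) : bool :=
  match o with Some r => t < r | None => true end.

Lemma Ifun_pos l : all (fun x => 0 < x.1) l ->
  match Ifun l return Prop with Some r => 0 < r | None => True end.
Proof.
elim: l => //= x l IH /andP [Hx Hl].
case: ifP => Hs; first exact: IH.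
have Hq : 0 < x.1 / x.2 by rewrite divr_gt0 // ltNge Hs.
move: (IH Hl); case: (Ifun l) => // r Hr.
by rewrite lt_min Hr Hq.
Qed.

Lemma Ifun_spec l t : 0 < t -> all (fun x => 0 < x.1) l ->
  below t (Ifun l) = all (fun x => t * x.2 < x.1) l.
Proof.
move=> t0; elim: l => //= x l IH /andP [Hx Hl].
case: ifP => Hs.
  rewrite -IH //; have -> : t * x.2 < x.1 by apply: le_lt_trans Hx; rewrite pmulr_rle0.
  by [].
have s0 : 0 < x.2 by rewrite ltNge Hs.
have E : (t < x.1 / x.2) = (t * x.2 < x.1) by rewrite ltr_pdivlMr.
rewrite -IH //; case: (Ifun l) => [r|] /=; last by rewrite E andbT.
by rewrite lt_min E andbC.
Qed.

End Gen.

Section Vertex.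
Variables (R : realType) (n s : nat) (A : 'I_s -> seq 'rV[int]_n) (b : 'I_s -> 'rV[int]_n -> R).
Hypothesis Auniq : forall i, uniq (A i).
Hypothesis Ane : forall i, A i != [::].
Variables (p : 'rV[R]_n) (M : 'M[R]_n) (ms : 'I_s -> nat -> nat) (d : nat) (xi : 'rV[R]_n) (q : 'I_s).
Hypothesis Hd : (1 <= d <= n)%N.
Hypothesis Hsum : (\sum_(i < s) ms i d.-1)%N = d.-1.
Hypothesis Hvert : is_vertex A b p M ms d xi.
Hypothesis Hq : mult A b xi q = (ms q d.-1).+1.

Local Notation act := (active A b xi).
Local Notation mlt := (mult A b xi).
Local Notation ov := (objval b).

Lemma act_mem i a : act i a -> a \in A i.
Proof. by case/andP. Qed.

Lemma ex_act i : exists2 a, a \in A i & act i a.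
Proof.
have [a aA Ha] := exists_max (ov xi i) (Ane i).
by exists a => //; rewrite /active aA.
Qed.

Definition acts i := filter (act i) (A i).

Lemma mem_acts i a : (a \in acts i) = act i a.
Proof. by rewrite mem_filter; case H: (act i a) => //; rewrite (act_mem H). Qed.

Lemma size_acts i : size (acts i) = (mlt i).+1.
Proof.
rewrite size_filter /mult prednK //; have [a aA Ha] := ex_act i.
by rewrite -has_count; apply/hasP; exists a.
Qed.

Lemma acts_uniq i : uniq (acts i).
Proof. exact: filter_uniq. Qed.

Definition base i := head 0 (acts i).

Lemma acts_cons i : acts i = base i :: behead (acts i).
Proof. by move: (size_acts i); rewrite /base; case: (acts i). Qed.

Lemma base_act i : act i (base i).
Proof. by rewrite -mem_acts acts_cons mem_head. Qed.

Definition lam i := ov xi i (base i).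

Lemma act_val i a : act i a -> ov xi i a = lam i.
Proof.
move=> Ha; have Hb := base_act i.
case/andP: Ha => aA /allP Ha; case/andP: Hb => bA /allP Hb.
by apply/eqP; rewrite eq_le (Ha _ bA) (Hb _ aA).
Qed.

Lemma mult_ge i : (ms i d.-1 <= mlt i)%N.
Proof. by case: Hvert => [[_ H] _]; apply: H. Qed.

Lemma sum_mult : (\sum_i mlt i)%N = d.
Proof. by case: Hvert. Qed.

Lemma mult_eq i : i != q -> mlt i = ms i d.-1.
Proof.
apply: (sum_eq_excess (f := mlt) (g := fun i => ms i d.-1) mult_ge Hq).
by rewrite sum_mult Hsum; case/andP: Hd; case: d.
Qed.

Lemma mult_q_pos : (0 < mlt q)%N.
Proof. by rewrite Hq. Qed.

Definition NB := [seq (i, a) | i <- enum 'I_s, a <- behead (acts i)].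

Lemma size_NB : size NB = d.
Proof.
rewrite size_allpairs_dep sumnE big_map big_enum /= -sum_mult.
by apply: eq_bigr => i _; rewrite size_behead size_acts.
Qed.

Lemma mem_NB i a : ((i, a) \in NB) = (a \in behead (acts i)).
Proof.
apply/allpairsPdep/idP => [[i' [a' [_ H [-> ->]]]] // | H].
by exists i, a; rewrite mem_enum.
Qed.

Lemma behead_act i a : (a \in behead (acts i)) = act i a && (a != base i).
Proof.
have := acts_uniq i; rewrite -mem_acts [in RHS]acts_cons in_cons => /=.
rewrite [in uniq _]acts_cons /= => /andP [Hn _].
case: (altP (a =P base i)) => [-> | _] //=; [exact: negbTE | by rewrite andbT].
Qed.

Lemma NB_uniq : uniq NB.
Proof.
apply: allpairs_uniq_dep; first exact: enum_uniq.
  move=> i _; have := acts_uniq i; rewrite acts_cons /=; by case/andP.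
by move=> [i a] [j c] _ _ /= [E1 E2]; subst.
Qed.

Definition nb k := nth (q, 0) NB k.

Lemma nb_NB k : (k < d)%N -> nb k \in NB.
Proof. by move=> Hk; rewrite mem_nth // size_NB. Qed.

Lemma nb_act k : (k < d)%N -> act (nb k).1 (nb k).2 /\ (nb k).2 != base (nb k).1.
Proof.
move/nb_NB; case: (nb k) => i a; rewrite mem_NB behead_act /=.
by case/andP.
Qed.

Definition pts := flatten [seq A i | i <- enum 'I_s].

Lemma mem_pts i a : a \in A i -> a \in pts.
Proof. by move=> H; apply/flatten_mapP; exists i; rewrite ?mem_enum. Qed.

Definition fcfg : {ffun 'I_n -> 'I_(size pts).+1 * 'I_(size pts).+1} :=
  [ffun k : 'I_n => (inord (index (nb k).2 pts), inord (index (base (nb k).1) pts))].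

Definition Dm : 'M[R]_n := @cfgD R n pts d fcfg.

Lemma Dm_row (k c : 'I_n) : (k < d)%N ->
  Dm k c = (((nb k).2 - base (nb k).1) 0 c)%:~R.
Proof.
move=> Hk; rewrite /Dm /cfgD mxE Hk ffunE /=.
have [Ha _] := nb_act Hk.
rewrite !inordK ?ltnS ?index_size // !nth_index //.
  exact: (mem_pts (act_mem (base_act _))).
exact: (mem_pts (act_mem Ha)).
Qed.


Definition S := [seq (i, a) | i <- enum 'I_s, a <- acts i].

Lemma mem_S i a : ((i, a) \in S) = act i a.
Proof.
rewrite -mem_acts; apply/allpairsPdep/idP => [[i' [a' [_ H [-> ->]]]] // | H].
by exists i, a; rewrite mem_enum.
Qed.

Lemma S_uniq : uniq S.
Proof.
apply: allpairs_uniq_dep; first exact: enum_uniq.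
  move=> i _; exact: acts_uniq.
by move=> [i a] [j c] _ _ /= [E1 E2]; subst.
Qed.

Lemma size_S : size S = (d + s)%N.
Proof.
rewrite size_allpairs_dep sumnE big_map big_enum /= -sum_mult.
rewrite -[s in (_ + s)%N]card_ord -sum1_card -big_split /=.
by apply: eq_bigr => i _; rewrite size_acts addn1.
Qed.

Definition wT : 'cV[R]_(s + n + 1) :=
  col_mx (col_mx (\col_i lam i) xi^T) ((-1)%:M).

Definition phi (v : 'rV[R]_(s + n + 1)) : R := (v *m wT) 0 0.

Lemma phi_lift i a : act i a -> phi (lift_vec b i a) = 0.
Proof.
move=> Ha; rewrite /phi /lift_vec /wT !mul_row_col mulNmx -rowE.
rewrite mul_scalar_mx !mxE eqxx mulr1n mulrN1.
have E := act_val Ha; rewrite /objval /pairing in E.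
rewrite -E.
have -> : \sum_j (a ^ [eta intr])%sesqui 0 j * xi^T j 0 = \sum_(j < n) xi 0 j * (a 0 j)%:~R.
  by apply: eq_bigr => j _; rewrite !mxE mulrC.
by rewrite opprB subrK subrr.
Qed.

Lemma phi_last : phi (last_vec R n s) = -1.
Proof.
by rewrite /phi /last_vec /wT mul_row_col mul0mx add0r mul_scalar_mx !mxE eqxx mulr1n mul1r.
Qed.

Lemma phi_sum (I : Type) (r : seq I) (c : I -> R) (v : I -> 'rV[R]_(s + n + 1)) :
  phi (\sum_(k <- r) c k *: v k) = \sum_(k <- r) c k * phi (v k).
Proof.
rewrite /phi mulmx_suml summxE; apply: eq_bigr => k _.
by rewrite -scalemxAl mxE.
Qed.

Lemma sum_ind (T : eqType) (V : lmodType R) (r : seq T) (z : T) (F : T -> V) :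
  uniq r -> z \in r -> \sum_(y <- r) ((z == y)%:R *: F y) = F z.
Proof.
move=> ur zr; rewrite (bigD1_seq z) //= eqxx scale1r big1 ?addr0 //.
by move=> y; rewrite eq_sym => /negbTE ->; rewrite scale0r.
Qed.

Lemma lift_e i a r : lift_vec b i a 0 (lshift 1 (lshift n r)) = - (r == i)%:R.
Proof. by rewrite /lift_vec !row_mxEl !mxE eqxx. Qed.

Lemma lift_a i a c : lift_vec b i a 0 (lshift 1 (rshift s c)) = (a 0 c)%:~R.
Proof. by rewrite /lift_vec row_mxEl row_mxEr !mxE. Qed.

Lemma lift_b i a (z : 'I_1) : lift_vec b i a 0 (rshift (s + n) z) = b i a.
Proof. by rewrite /lift_vec row_mxEr !mxE (ord1 z) eqxx mulr1n. Qed.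

Lemma Dm_high (k c : 'I_n) : (d <= k)%N -> Dm k c = 0.
Proof. by move=> Hk; rewrite /Dm /cfgD mxE ltnNge Hk. Qed.

Lemma nb_base_neq k k' : (k < d)%N -> ((nb k').1, base (nb k').1) != nb k.
Proof.
move=> Hk; have [_ H] := nb_act Hk; apply/negP => /eqP E.
by move: H; rewrite -E eqxx.
Qed.

Lemma nb_inj (k k' : 'I_n) : (k < d)%N -> (k' < d)%N -> nb k' = nb k -> k' = k.
Proof.
move=> Hk Hk' E; apply/val_inj => /=.
by apply/eqP; rewrite -(nth_uniq (q, 0) _ _ NB_uniq) ?size_NB //; apply/eqP.
Qed.

Lemma Dm_indep : general_position A b -> (s <= n)%N ->
  forall x : 'rV[R]_n, x *m Dm = 0 -> forall k : 'I_n, (k < d)%N -> x 0 k = 0.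
Proof.
move=> Hgp Hsn x Hx.
pose bp := fun k : 'I_n => ((nb k).1, base (nb k).1).
pose V := \sum_(k < n | (k < d)%N) x 0 k *:
   (lift_vec b (nb k).1 (nb k).2 - lift_vec b (bp k).1 (bp k).2).
pose coef := fun y => \sum_(k < n | (k < d)%N) x 0 k * ((nb k == y)%:R - (bp k == y)%:R).
pose L := [seq lift_vec b y.1 y.2 | y <- S].
have HS : forall y, y \in S -> y.2 \in A y.1.
  by case=> i a; rewrite mem_S; apply: act_mem.
have Hsz : (size S <= n + s + 1)%N by rewrite size_S; case/andP: Hd; lia.
have uS : forall u : 'I_(size L), (u < size S)%N.
  by move=> u; rewrite -(size_map (fun y => lift_vec b y.1 y.2) S); exact: ltn_ord.
have LS : forall u : 'I_(size L), L`_u = lift_vec b (nth (q, 0) S u).1 (nth (q, 0) S u).2.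
  by move=> u; rewrite (nth_map (q, 0)) // uS.
have phiL : forall c : 'I_(size L) -> R, phi (\sum_(u < size L) c u *: L`_u) = 0.
  move=> c; rewrite (phi_sum (index_enum _)) big1 // => u _.
  rewrite LS phi_lift ?mulr0 // -mem_S; case: (nth _ _ _) (mem_nth (q, 0) (uS u)) => [i a] //.
have EV : \sum_(u < size L) coef (nth (q, 0) S u) *: L`_u = V.
  have -> : \sum_(u < size L) coef (nth (q, 0) S u) *: L`_u =
            \sum_(y <- S) coef y *: lift_vec b y.1 y.2.
    pose G := fun u : nat => coef (nth (q, 0) S u) *: lift_vec b (nth (q, 0) S u).1 (nth (q, 0) S u).2.
    rewrite (eq_bigr (fun u : 'I_(size L) => G u)); last by move=> u _; rewrite LS.
    rewrite -(big_mkord xpredT G) [RHS](big_nth (q, 0)).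
    by have -> : size L = size S by rewrite size_map.
  rewrite /coef /V; under eq_bigr do rewrite scaler_suml.
  rewrite exchange_big /=; apply: eq_bigr => k Hk.
  under eq_bigr do rewrite -scalerA.
  rewrite -scaler_sumr; congr (_ *: _).
  under eq_bigr do rewrite scalerBl.
  rewrite sumrB (sum_ind _ S_uniq) ?(sum_ind _ S_uniq) //.
    by rewrite /bp; case: (nb k) => i a /=; rewrite mem_S base_act.
  by have [Ha _] := nb_act Hk; case: (nb k) Ha => i a /=; rewrite mem_S.
have Vlast : V = V 0 (rshift (s + n) 0) *: last_vec R n s.
  apply/rowP => j; rewrite mxE /last_vec.
  rewrite -(splitK j); case: (split j) => [j'|j''] /=; last first.
    by rewrite row_mxEr mxE (ord1 j'') eqxx mulr1.
  rewrite row_mxEl mxE mulr0 /V summxE.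
  rewrite -(splitK j'); case: (split j') => [r|c] /=.
    by apply: big1 => k _; rewrite mxE [X in _ * X]mxE [(- lift_vec _ _ _) _ _]mxE /bp !lift_e subrr mulr0.
  transitivity ((x *m Dm) 0 c); last by rewrite Hx mxE.
  rewrite mxE [RHS](bigID (fun k : 'I_n => (k < d)%N)) /=.
  rewrite [X in _ = _ + X]big1 ?addr0; last first.
    by move=> k; rewrite -leqNgt => Hk; rewrite Dm_high ?mulr0.
  apply: eq_bigr => k Hk; rewrite mxE [X in _ * X]mxE [(- lift_vec _ _ _) _ _]mxE !lift_a Dm_row //.
  by rewrite /bp !mxE rmorphB.
have V0 : V = 0.
  have := phiL (fun u => coef (nth (q, 0) S u)); rewrite EV.
  rewrite {1}Vlast /phi -scalemxAl mxE -/(phi _) phi_last mulrN1 => /eqP.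
  by rewrite oppr_eq0 => /eqP H; rewrite Vlast H scale0r.
case: (Hgp S S_uniq HS Hsz) => [Hli | [c Hc]]; last first.
  have := phiL c; rewrite -/L Hc phi_last => /eqP.
  by rewrite oppr_eq0 oner_eq0.
have Hc := Hli (fun u => coef (nth (q, 0) S u)).
rewrite -/L EV V0 in Hc; have {}Hc := Hc erefl.
move=> k Hk.
have Hin : nb k \in S by have [Ha _] := nb_act Hk; case: (nb k) Ha => i a /=; rewrite mem_S.
have Hu : (index (nb k) S < size L)%N by rewrite size_map index_mem.
have := Hc (Ordinal Hu); rewrite /= nth_index // /coef (bigD1 k) //= eqxx.
rewrite (negbTE (nb_base_neq _ Hk)) subr0 mulr1 big1 ?addr0 //.
move=> k' /andP [Hk' Hkk']; rewrite (negbTE (nb_base_neq _ Hk)) subr0.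
case: eqP => [E | _]; last by rewrite mulr0.
by move: Hkk'; rewrite (nb_inj Hk Hk' E) eqxx.
Qed.


Definition H := @Hm R n pts d fcfg M.
Hypothesis Hunit : H \in unitmx.

Local Notation pair := (@pairing R n).

Lemma pairingD (u v : 'rV[R]_n) a : pair (u + v) a = pair u a + pair v a.
Proof. by rewrite /pairing -big_split; apply: eq_bigr => j _; rewrite mxE mulrDl. Qed.

Lemma pairingZ t (v : 'rV[R]_n) a : pair (t *: v) a = t * pair v a.
Proof. by rewrite /pairing mulr_sumr; apply: eq_bigr => j _; rewrite mxE mulrA. Qed.

Lemma pairingB (u v : 'rV[R]_n) a : pair (u - v) a = pair u a - pair v a.
Proof. by rewrite -scaleN1r pairingD pairingZ mulN1r. Qed.

Lemma pairing0 a : pair 0 a = 0.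
Proof. by rewrite /pairing big1 // => j _; rewrite mxE mul0r. Qed.

Lemma objval_ray (u v : 'rV[R]_n) t i a : objval b (u + t *: v) i a = objval b u i a + t * pair v a.
Proof. by rewrite /objval pairingD pairingZ addrAC. Qed.

Lemma Hcol (c : 'rV[R]_n) (k : 'I_n) : (H *m c^T) k 0 =
  if (k < d)%N then pair (c *m M) (nb k).2 - pair (c *m M) (base (nb k).1) else c 0 k.
Proof.
rewrite /H /Hm mulmxDl -mulmxA -trmx_mul /Jd mul_diag_mx !mxE.
case: ifP => Hk.
  rewrite leqNgt Hk mul0r addr0 /pairing -sumrB -/Dm; apply: eq_bigr => j _.
  by rewrite Dm_row // !mxE rmorphB /= mulrC mulrBr.
rewrite leqNgt Hk mul1r big1 ?add0r // -/Dm => j _.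
by rewrite Dm_high ?mul0r // leqNgt Hk.
Qed.

Definition aj (j : nat) := nth 0 (acts q) j.

Definition z (j : nat) (i : 'I_s) (a : 'rV[int]_n) : R :=
  if (i == q) && (a == aj j) then -1 else 0.

Definition tgr (j : nat) : 'rV[R]_n :=
  \row_k (if (k < d)%N then z j (nb k).1 (nb k).2 - z j (nb k).1 (base (nb k).1) else 0).

Definition cj j := tgr j *m (invmx H)^T.
Definition Dj j := cj j *m M.

Lemma H_cj j : H *m (cj j)^T = (tgr j)^T.
Proof. by rewrite /cj trmx_mul trmxK mulKVmx. Qed.

Lemma H_uniq (c : 'rV[R]_n) (t : R) j : H *m c^T = t *: (tgr j)^T -> c = t *: cj j.
Proof.
move=> E; apply: trmx_inj; rewrite linearZ /= /cj trmx_mul trmxK.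
by rewrite -(mulKmx Hunit c^T) E scalemxAr.
Qed.


Lemma cj_high j (k : 'I_n) : (d <= k)%N -> cj j 0 k = 0.
Proof.
move=> Hk; have Hk' : (k < d)%N = false by rewrite ltnNge Hk.
have := congr1 (fun X : 'M[R]_(n, 1) => X k 0) (H_cj j).
by rewrite /= Hcol Hk' => ->; rewrite !mxE Hk'.
Qed.

Lemma Dj_flag j : Dj j = \sum_(l < n | (l < d)%N) cj j 0 l *: row l M.
Proof.
rewrite /Dj mulmx_sum_row (bigID (fun l : 'I_n => (l < d)%N)) /= [X in _ + X]big1 ?addr0 //.
by move=> l; rewrite -leqNgt => Hl; rewrite cj_high ?scale0r.
Qed.

Lemma NB_index i a : act i a -> a != base i -> exists k : 'I_n, (k < d)%N /\ nb k = (i, a).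
Proof.
move=> Ha Hb; have Hin : (i, a) \in NB by rewrite mem_NB behead_act Ha Hb.
have Hk : (index (i, a) NB < d)%N by rewrite -size_NB index_mem.
have Hkn : (index (i, a) NB < n)%N by case/andP: Hd => _; apply: leq_trans Hk.
by exists (Ordinal Hkn); split => //; rewrite /nb nth_index.
Qed.

Definition mu j i := pair (Dj j) (base i) - z j i (base i).

Lemma Dj_act j i a : act i a -> pair (Dj j) a = mu j i + z j i a.
Proof.
move=> Ha; case: (altP (a =P base i)) => [-> | Hb]; first by rewrite /mu subrK.
have [k [Hk E]] := NB_index Ha Hb.
have := congr1 (fun X : 'M[R]_(n, 1) => X k 0) (H_cj j); rewrite /= Hcol Hk !mxE Hk E /= => Ed.
rewrite /mu; move: Ed; rewrite -/(Dj j); lra.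
Qed.

Lemma aj_act j : (j < (mlt q).+1)%N -> act q (aj j).
Proof. by move=> Hj; rewrite -mem_acts mem_nth // size_acts. Qed.

Lemma aj_inj j j' : (j < (mlt q).+1)%N -> (j' < (mlt q).+1)%N -> aj j = aj j' -> j = j'.
Proof.
by move=> Hj Hj' E; apply/eqP; rewrite -(nth_uniq 0 _ _ (acts_uniq q)) ?size_acts //; rewrite /aj in E; rewrite E.
Qed.

Lemma sum_z i a : act i a -> \sum_(j < (mlt q).+1) z j i a = if i == q then -1 else 0.
Proof.
move=> Ha; rewrite /z; case: (altP (i =P q)) => [Ei | Ni] /=; last by rewrite big1.
subst i; have Hin : a \in acts q by rewrite mem_acts.
have Hj : (index a (acts q) < (mlt q).+1)%N by rewrite -size_acts index_mem.
rewrite (bigD1 (Ordinal Hj)) //= /aj nth_index // eqxx big1 ?addr0 // => j Hjj.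
case: eqP => // Ea; exfalso; move/eqP: Hjj; apply; apply/val_inj => /=.
by rewrite Ea /aj index_uniq ?size_acts ?acts_uniq.
Qed.

Lemma sum_tgr : \sum_(j < (mlt q).+1) tgr j = 0.
Proof.
apply/rowP => k; rewrite summxE [RHS]mxE.
case: (ltnP k d) => Hk; last by apply: big1 => j _; rewrite mxE ltnNge Hk.
have [Ha _] := nb_act Hk.
rewrite (eq_bigr (fun j : 'I_(mlt q).+1 =>
   z j (nb k).1 (nb k).2 - z j (nb k).1 (base (nb k).1))); last by move=> j _; rewrite mxE Hk.
by rewrite sumrB !sum_z ?base_act // subrr.
Qed.

Lemma sum_Dj : \sum_(j < (mlt q).+1) Dj j = 0.
Proof. by rewrite /Dj /cj -mulmx_suml -mulmx_suml sum_tgr !mul0mx. Qed.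


Definition W j i a := act i a && ~~ ((i == q) && (a == aj j)).

Definition ALL := [seq (i, a) | i <- enum 'I_s, a <- A i].

Definition gs j : seq (R * R) :=
  [seq (lam x.1 - objval b xi x.1 x.2, pair (Dj j) x.2 - mu j x.1) | x <- ALL & ~~ act x.1 x.2].

Definition Ij j := Ifun (gs j).

Lemma nact_lt (eta : 'rV[R]_n) i a w : a \in A i -> ~~ active A b eta i a ->
  active A b eta i w -> objval b eta i a < objval b eta i w.
Proof.
move=> aA; rewrite /active aA /= => /allPn [a' a'A]; rewrite -ltNge => H.
by case/andP => _ /allP /(_ a' a'A) Hw; apply: lt_le_trans Hw.
Qed.

Lemma all_gs j (P : R * R -> bool) :
  all P (gs j) <-> (forall i a, a \in A i -> ~~ act i a ->
     P (lam i - objval b xi i a, pair (Dj j) a - mu j i)).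
Proof.
rewrite all_map all_filter; split.
  move/all_allpairsP => H i a aA Na; have := H i a (mem_enum _ i) aA.
  by rewrite /= Na.
move=> H; apply/all_allpairsP => i a _ aA /=.
by apply/implyP => Na; apply: H.
Qed.

Lemma gs_pos j : all (fun x => 0 < x.1) (gs j).
Proof.
apply/all_gs => i a aA Na /=; rewrite subr_gt0.
exact: (nact_lt aA Na (base_act i)).
Qed.

Lemma W_ex j i : exists w, W j i w.
Proof.
case: (altP (i =P q)) => [-> | Ni]; last first.
  by exists (base i); rewrite /W base_act /= (negbTE Ni).
have Hsz : (0 < size (behead (acts q)))%N by rewrite size_behead size_acts /= mult_q_pos.
set x := nth 0 (behead (acts q)) 0.
have Hx : x \in behead (acts q) by rewrite mem_nth.
move: Hx; rewrite behead_act => /andP [Hx Hxb].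
case: (altP (base q =P aj j)) => E.
  by exists x; rewrite /W Hx eqxx /= -E Hxb.
by exists (base q); rewrite /W base_act eqxx /= E.
Qed.

Lemma W_act j i a : W j i a -> act i a.
Proof. by case/andP. Qed.

Lemma ov_act j t i a : act i a ->
  objval b (xi + t *: Dj j) i a = lam i + t * mu j i + t * z j i a.
Proof. by move=> Ha; rewrite objval_ray (act_val Ha) (Dj_act j Ha) mulrDr addrA. Qed.

Lemma z_W j i a : W j i a -> z j i a = 0.
Proof. by case/andP => _ /negbTE H; rewrite /z H. Qed.

Lemma z_le0 j i a : z j i a <= 0.
Proof. by rewrite /z; case: ifP => _; rewrite ?lerN10. Qed.

Lemma valid j t : 0 < t ->
  ((forall i a, active A b (xi + t *: Dj j) i a = W j i a) <-> below t (Ij j)).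
Proof.
move=> t0; rewrite /Ij Ifun_spec ?gs_pos // all_gs /=.
set eta := xi + t *: Dj j; split.
  move=> HW i a aA Na.
  have [w Hw] := W_ex j i.
  have Naeta : ~~ active A b eta i a by rewrite HW /W (negbTE Na).
  have := nact_lt aA Naeta (w := w); rewrite HW Hw => /(_ isT).
  rewrite /eta (ov_act j t (W_act Hw)) (z_W Hw) mulr0 addr0 objval_ray => H.
  rewrite mulrBr; lra.
move=> Hb i a.
case aA: (a \in A i); last first.
  by rewrite /active aA /W /active aA.
have [w Hw] := W_ex j i.
have Hlt : forall a', a' \in A i -> ~~ act i a' -> objval b eta i a' < lam i + t * mu j i.
  move=> a' a'A Na'; have := Hb i a' a'A Na'; rewrite /eta objval_ray mulrBr; lra.
case Wa: (W j i a).
  rewrite /active aA /=; apply/allP => a' a'A.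
  rewrite /eta (ov_act j t (W_act Wa)) (z_W Wa) mulr0 addr0.
  case Ha': (act i a'); last by apply: ltW; apply: Hlt; rewrite ?Ha'.
  rewrite (ov_act j t Ha'); have := z_le0 j i a'; nra.
apply/negbTE/negP => Ha.
have : objval b eta i a < objval b eta i w.
  case Hax: (act i a).
    move: Wa; rewrite /W Hax /= => /negbFE Ez.
    rewrite /eta (ov_act j t Hax) (ov_act j t (W_act Hw)) (z_W Hw) /z Ez; lra.
  rewrite /eta (ov_act j t (W_act Hw)) (z_W Hw) mulr0 addr0; by apply: Hlt; rewrite ?aA ?Hax.
move=> Hlt2; case/andP: Ha => _ /allP /(_ w (act_mem (W_act Hw))) Hle; lra.
Qed.


Lemma act_eq (eta : 'rV[R]_n) i x y : active A b eta i x -> active A b eta i y ->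
  objval b eta i x = objval b eta i y.
Proof.
case/andP => xA /allP Hx; case/andP => yA /allP Hy.
by apply/eqP; rewrite eq_le (Hx _ yA) (Hy _ xA).
Qed.


Definition Ray j := ray xi (Dj j) (Ij j).

Lemma Ij_pos j : match Ij j return Prop with Some r => 0 < r | None => True end.
Proof. exact: (Ifun_pos (gs_pos j)). Qed.

Definition t0 j : R := match Ij j with Some r => r / 2 | None => 1 end.

Lemma t0_pos j : 0 < t0 j.
Proof. by rewrite /t0; move: (Ij_pos j); case: (Ij j) => // r r0; rewrite divr_gt0. Qed.

Lemma t0_below j t : 0 < t -> t <= t0 j -> below t (Ij j).
Proof.
rewrite /t0; move: (Ij_pos j); case: (Ij j) => //= r r0 _ Ht.
apply: le_lt_trans Ht _; lra.
Qed.

Lemma Ray_pt j t : 0 < t -> below t (Ij j) -> Ray j (xi + t *: Dj j).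
Proof. by move=> Ht Hb; exists t; split => //; split => //; move: Hb; case: (Ij j). Qed.

Lemma Ray_W j eta : Ray j eta -> forall i a, active A b eta i a = W j i a.
Proof.
case=> t [Ht [Hb ->]]; apply/(valid j Ht).
by move: Hb; case: (Ij j).
Qed.

Lemma xi_flag : exists cx : 'I_n -> R, xi = p + \sum_(l < n | (l < d)%N) cx l *: row l M.
Proof. by case: Hvert => [[H _] _]. Qed.

Lemma Ray_char j eta : (j < (mlt q).+1)%N -> Ray j eta <-> (in_flag p M d eta /\ forall i a, active A b eta i a = W j i a).
Proof.
move=> Hj; have [cx Ecx] := xi_flag.
split => [HR | [[ce Ece] HW]].
  split; last exact: Ray_W.
  case: HR => t [_ [_ ->]].
  exists (fun l => cx l + t * cj j 0 l).
  rewrite Ecx Dj_flag scaler_sumr -addrA -big_split /=; congr (_ + _).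
  by apply: eq_bigr => l _; rewrite scalerA -scalerDl.
pose cv : 'rV[R]_n := \row_l (if (l < d)%N then ce l - cx l else 0).
have Eeta : eta = xi + cv *m M.
  have -> : cv *m M = \sum_(l < n | (l < d)%N) (ce l - cx l) *: row l M.
    rewrite mulmx_sum_row (bigID (fun l : 'I_n => (l < d)%N)) /=.
    rewrite [X in _ + X]big1 ?addr0; last first.
      by move=> l; rewrite -leqNgt mxE => Hl; rewrite ltnNge Hl /= scale0r.
    by apply: eq_bigr => l Hl; rewrite mxE Hl.
  rewrite Ece Ecx -addrA -big_split /=; congr (_ + _); apply: eq_bigr => l Hl.
  by rewrite -scalerDl addrC subrK.
have [wq Hwq] := W_ex j q.
pose t := objval b eta q wq - objval b eta q (aj j).
have Hact : forall x i, W j i x -> active A b eta i x by move=> x i; rewrite HW.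
have HajA : aj j \in A q.
  exact: act_mem (aj_act Hj).
have Hval : forall i, exists L, forall x, act i x -> objval b eta i x = L + t * z j i x.
  move=> i; have [w Hw] := W_ex j i; exists (objval b eta i w) => x Hx.
  case Wx: (W j i x).
    by rewrite (z_W Wx) mulr0 addr0; apply: act_eq; rewrite HW ?Wx ?Hw.
  move: Wx; rewrite /W Hx /= => /negbFE /andP [/eqP Ei /eqP Ex]; subst i x.
  have E1 : objval b eta q w = objval b eta q wq by apply: act_eq; rewrite HW.
  rewrite /z !eqxx /= /t E1; lra.
have Hpair : forall i x, pair (cv *m M) x = objval b eta i x - objval b xi i x.
  move=> i x; have -> : cv *m M = eta - xi by rewrite Eeta [xi + _]addrC addrK.
  by rewrite pairingB /objval; lra.
have Hcv : H *m cv^T = t *: (tgr j)^T.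
  apply/colP => k; rewrite Hcol !mxE.
  case: ifP => Hk; last by rewrite Hk mulr0.
  have [Ha Hb] := nb_act Hk; have [L HL] := Hval (nb k).1.
  rewrite !(Hpair (nb k).1) HL // HL ?base_act // (act_val Ha) (act_val (base_act _)).
  lra.
have Ecv := H_uniq Hcv.
have Naj : ~~ active A b eta q (aj j) by rewrite HW /W !eqxx andbF.
have t_pos : 0 < t.
  have := nact_lt HajA Naj (Hact wq q Hwq); rewrite /t; lra.
have Eeta2 : eta = xi + t *: Dj j by rewrite Eeta Ecv /Dj scalemxAl.
have Hb : below t (Ij j) by apply/(valid j t_pos); rewrite -Eeta2.
by rewrite Eeta2; apply: Ray_pt.
Qed.


Lemma count_act i : count (act i) (A i) = (mlt i).+1.
Proof. by rewrite -size_filter -/(acts i) size_acts. Qed.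

Lemma count_W j i : (j < (mlt q).+1)%N -> count (W j i) (A i) = (ms i d.-1).+1.
Proof.
move=> Hj; case: (altP (i =P q)) => [Ei | Ni]; last first.
  rewrite -(mult_eq Ni) -count_act; apply: eq_count => a.
  by rewrite /W (negbTE Ni) andbT.
subst i; rewrite -Hq.
pose P2 := fun a => act q a && (a == aj j).
have E := count_predUI (W j q) P2 (A q).
have E1 : count (predU (W j q) P2) (A q) = count (act q) (A q).
  by apply: eq_count => a; rewrite /= /W /P2 eqxx /=; case: (act q a); case: (a == aj j).
have E2 : count (predI (W j q) P2) (A q) = 0%N.
  transitivity (count pred0 (A q)); last exact: count_pred0.
  apply: eq_count => a.
  by rewrite /= /W /P2 eqxx /=; case: (act q a); case: (a == aj j).
have E3 : count P2 (A q) = 1%N.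
  rewrite (eq_count (a2 := pred1 (aj j))); last first.
    move=> a /=; rewrite /P2; case: (altP (a =P aj j)) => [-> | _]; rewrite ?andbF //.
    by rewrite andbT aj_act.
  by rewrite count_uniq_mem // (act_mem (aj_act Hj)).
move: E; rewrite E1 E2 E3 count_act addn0 addn1 => /eqP; rewrite eqSS => /eqP.
by [].
Qed.

Lemma Dj_neq0 j : (j < (mlt q).+1)%N -> Dj j != 0.
Proof.
move=> Hj; apply/eqP => E0; have [w Hw] := W_ex j q.
have := Dj_act j (aj_act Hj); have := Dj_act j (W_act Hw).
rewrite E0 !pairing0 (z_W Hw) /z !eqxx /=; lra.
Qed.

Lemma norm_small (v : 'rV[R]_n) e k : 0 < e -> \sum_(l < n) (v 0 l) ^+ 2 < e ^+ 2 -> `|v 0 k| < e.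
Proof.
move=> e0 Hs; have : (v 0 k) ^+ 2 < e ^+ 2.
  apply: le_lt_trans Hs; rewrite (bigD1 k) //= lerDl.
  by apply: sumr_ge0 => l _; rewrite sqr_ge0.
rewrite -real_normK ?num_real // => H.
by rewrite -(ltr_pXn2r (n := 2)) // ?nnegrE ?normr_ge0 ?ltW.
Qed.

Lemma Ray_edge j : (j < (mlt q).+1)%N -> is_edge A b p M ms d (Ray j) /\ endpoint xi (Ray j).
Proof.
move=> Hj; have D0 := Dj_neq0 Hj; have tp := t0_pos j.
split; first split.
- split.
    exists xi, (Dj j) => eta [t [_ [_ ->]]]; by exists t.
  exists (xi + t0 j *: Dj j), (xi + (t0 j / 2) *: Dj j); split; last split.
  + by apply: Ray_pt; last apply: t0_below.
  + by apply: Ray_pt; [|apply: t0_below]; lra.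
  + move/(congr1 (fun x => x - xi)); rewrite ![_ + _ - xi]addrC !addKr => /eqP.
    rewrite -subr_eq0 -scalerBl scaler_eq0 (negbTE D0) orbF; lra.
- exists (W j); split; first by move=> i a /W_act /act_mem.
  split; first by move=> i; apply: count_W.
  by move=> eta; apply: Ray_char.
split.
  move/Ray_W => /(_ q (aj j)); rewrite /W !eqxx andbF.
  by rewrite (aj_act Hj).
move=> eps eps0.
set K := \sum_(l < n) (Dj j 0 l) ^+ 2.
have K0 : 0 <= K by apply: sumr_ge0 => l _; rewrite sqr_ge0.
set e' := eps / (K + 1).
have e'0 : 0 < e' by rewrite divr_gt0 // ltr_wpDl.
have Ee' : e' * (K + 1) = eps by rewrite /e' divfK // gt_eqF // ltr_wpDl.
set t := Num.min (Num.min (t0 j) 1) e'.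
have t_pos : 0 < t by rewrite /t !lt_min tp e'0 ltr01.
have t_t0 : t <= t0 j by rewrite /t !ge_min lexx.
have t_1 : t <= 1 by rewrite /t !ge_min lexx orbT.
have t_e : t <= e' by rewrite /t !ge_min lexx orbT.
exists (xi + t *: Dj j); split; first by apply: Ray_pt => //; apply: t0_below.
have -> : \sum_(l < n) ((xi + t *: Dj j) 0 l - xi 0 l) ^+ 2 = t ^+ 2 * K.
  rewrite /K mulr_sumr; apply: eq_bigr => l _; rewrite !mxE addrC addKr.
  by rewrite exprMn.
have h1 : 0 <= t * (1 - t) * K by apply: mulr_ge0 => //; apply: mulr_ge0; [exact: ltW | rewrite subr_ge0].
have h2 : 0 <= (e' - t) * K by rewrite mulr_ge0 // subr_ge0.
nra.
Qed.


Lemma Ray_distinct j j' : (j < (mlt q).+1)%N -> (j' < (mlt q).+1)%N -> j != j' ->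
  ~ (forall eta, Ray j eta <-> Ray j' eta).
Proof.
move=> Hj Hj' Njj HR.
have H1 : Ray j (xi + t0 j *: Dj j) by apply: Ray_pt; [apply: t0_pos | apply: t0_below; rewrite ?t0_pos].
have H2 := (proj1 (HR _)) H1.
have := Ray_W H1 q (aj j); rewrite (Ray_W H2) /W !eqxx andbF (aj_act Hj) /=.
case: eqP => // /(aj_inj Hj Hj') E; move: Njj; rewrite E eqxx.
by [].
Qed.

Lemma pairingBr (v : 'rV[R]_n) x y : pair v (x - y) = pair v x - pair v y.
Proof.
by rewrite /pairing -sumrB; apply: eq_bigr => l _; rewrite !mxE intrD intrN mulrDr mulrN.
Qed.

Lemma pair_small (v : 'rV[R]_n) (c : 'rV[int]_n) e : 0 < e ->
  \sum_(l < n) (v 0 l) ^+ 2 < e ^+ 2 ->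
  `|pair v c| <= e * \sum_(l < n) `|(c 0 l)%:~R : R|.
Proof.
move=> e0 Hs; rewrite /pairing mulr_sumr; apply: le_trans (ler_norm_sum _ _ _) _.
apply: ler_sum => l _; rewrite normrM; apply: ler_wpM2r; first exact: normr_ge0.
exact: ltW (norm_small _ e0 Hs).
Qed.

Lemma count_split (T : Type) (P Q : pred T) (l : seq T) :
  count P l = (count (fun x => P x && Q x) l + count (fun x => P x && ~~ Q x) l)%N.
Proof.
elim: l => //= x l ->; case: (P x); case: (Q x) => /=; lia.
Qed.

Lemma edge_is_ray E : is_edge A b p M ms d E -> endpoint xi E ->
  exists j : 'I_(mlt q).+1, forall eta, E eta <-> Ray j eta.
Proof.
case=> _ [W' [HWA [HWc HE]]] [_ Hclose].
have Wsub : forall i a, W' i a -> act i a.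
  move=> i a Wa; apply/negPn/negP => Na; have aA := HWA i a Wa.
  have Hlt := nact_lt aA Na (base_act i).
  set g := objval b xi i (base i) - objval b xi i a.
  have g0 : 0 < g by rewrite subr_gt0.
  set C := \sum_(l < n) `|((base i - a) 0 l)%:~R : R|.
  have C0 : 0 <= C by apply: sumr_ge0 => l _; apply: normr_ge0.
  set e := g / (C + 1).
  have e0 : 0 < e by rewrite divr_gt0 // ltr_wpDl.
  have Ee : e * (C + 1) = g by rewrite /e divfK // gt_eqF // ltr_wpDl.
  have [eta [Eeta Hs]] := Hclose (e ^+ 2) (exprn_gt0 2 e0).
  have [_ Hact] := (proj1 (HE eta)) Eeta.
  have Aa : active A b eta i a by rewrite Hact.
  have Hle : objval b eta i (base i) <= objval b eta i a.
    by case/andP: Aa => _ /allP; apply; apply: act_mem (base_act i).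
  pose v := eta - xi.
  have Ev : forall x, objval b eta i x = objval b xi i x + pair v x.
    by move=> x; rewrite /objval /v pairingB; lra.
  have Hs' : \sum_(l < n) (v 0 l) ^+ 2 < e ^+ 2.
    by move: Hs; congr (_ < _); apply: eq_bigr => l _; rewrite /v !mxE.
  have Hp := pair_small (base i - a) e0 Hs'.
  rewrite pairingBr in Hp.
  move: Hle; rewrite !Ev => Hle.
  have Hn : -(pair v (base i) - pair v a) <= `|pair v (base i) - pair v a|.
    by rewrite -normrN ler_norm.
  have HeC : e * C < g by rewrite -Ee mulrDr mulr1 ltrDl.
  move: HeC Hp; rewrite /g -/C; lra.
have Hoth : forall i, i != q -> {in A i, forall a, W' i a = act i a}.
  move=> i Ni a aA; apply/idP/idP; first exact: Wsub.
  apply: (count_sub_eq (l := A i) (P := W' i) (Q := act i)) => //.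
    by move=> x _; apply: Wsub.
  by rewrite HWc count_act mult_eq.
have Hcnt : count (fun a => act q a && ~~ W' q a) (A q) = 1%N.
  have := count_split (act q) (W' q) (A q).
  rewrite count_act (eq_count (a1 := fun x => act q x && W' q x) (a2 := W' q)); last first.
    by move=> x; case Wx: (W' q x); rewrite ?andbT ?andbF // (Wsub _ _ Wx).
  rewrite HWc Hq; lia.
have /hasP [a0 a0A /andP [Ha0 Na0]] : has (fun a => act q a && ~~ W' q a) (A q).
  by rewrite has_count Hcnt.
have Hj : (index a0 (acts q) < (mlt q).+1)%N by rewrite -size_acts index_mem mem_acts.
exists (Ordinal Hj).
have Ea0 : aj (Ordinal Hj) = a0 by rewrite /aj /= nth_index // mem_acts.
have HWW : forall i a, W' i a = W (Ordinal Hj) i a.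
  move=> i a; case aA: (a \in A i); last first.
    rewrite /W /active aA /=; apply/negbTE/negP => Wa.
    by move: (HWA _ _ Wa); rewrite aA.
  case: (altP (i =P q)) => [Ei | Ni]; last first.
    by rewrite Hoth // /W (negbTE Ni) andbT.
  subst i; rewrite /W Ea0 eqxx /=.
  case: (altP (a =P a0)) => [-> | Na]; first by rewrite andbF (negbTE Na0).
  rewrite andbT; case Ha: (act q a); last by apply/negbTE/negP => /Wsub; rewrite Ha.
  apply/negPn/negP => NW; apply/eqP: Na.
  have Pa : (fun a => act q a && ~~ W' q a) a by rewrite /= Ha NW.
  have Pa0 : (fun a => act q a && ~~ W' q a) a0 by rewrite /= Ha0 Na0.
  by rewrite (count1_eq Hcnt aA Pa a0A Pa0) eqxx.
move=> eta; rewrite HE (Ray_char _ Hj); split => [[F1 F2] | [F1 F2]]; split => // i a.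
  by rewrite F2 HWW.
by rewrite F2 HWW.
Qed.

End Vertex.
Unset Implicit Arguments.

Theorem lemma3p1 (R : realType) (n s : nat)
  (A : 'I_s -> seq 'rV[int]_n) (b : 'I_s -> 'rV[int]_n -> R) :
  (1 <= n)%N -> (1 <= s <= n)%N ->
  (forall i, uniq (A i)) -> (forall i, A i != [::]) ->
  general_position A b ->
  (* genericity of the flag: outside the zero set of a nonzero polynomial *)
  exists P : {mpoly R[n + n * n]}, P != 0 /\
  forall (p : 'rV[R]_n) (M : 'M[R]_n),
    M \in unitmx -> P.@[flag_coords p M] != 0 ->
  forall (mm : 'I_s -> nat), (\sum_(i < s) mm i)%N = n ->
  forall ms : 'I_s -> nat -> nat, valid_mseq n mm ms ->
  forall d : nat, (1 <= d <= n)%N ->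
  forall xi : 'rV[R]_n, is_vertex A b p M ms d xi ->
  forall q : 'I_s, mult A b xi q = (ms q d.-1).+1 ->
  exists (D : 'I_(mult A b xi q).+1 -> 'rV[R]_n)
         (I : 'I_(mult A b xi q).+1 -> option R),
    (forall j, match I j return Prop with Some r => 0 < r | None => True end) /\
    (forall j, is_edge A b p M ms d (ray xi (D j) (I j)) /\
               endpoint xi (ray xi (D j) (I j))) /\
    (forall j j', j != j' ->
       ~ (forall eta, ray xi (D j) (I j) eta <-> ray xi (D j') (I j') eta)) /\
    (forall E : 'rV[R]_n -> Prop, is_edge A b p M ms d E -> endpoint xi E ->
       exists j, forall eta, E eta <-> ray xi (D j) (I j) eta) /\
    \sum_j D j = 0.
Proof.
move=> Hn Hs Auniq Ane Hgp.
exists (Ppoly R (pts A)); split; first exact: Ppoly_neq0.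
move=> p M _ HP mm _ ms [_ Hms2] d Hd xi Hv q Hq.
have Hsum : (\sum_(i < s) ms i d.-1)%N = d.-1.
  by apply: Hms2; case/andP: Hd => _; apply: leq_trans (leq_pred _).
have Hsn : (s <= n)%N by case/andP: Hs.
have Hdn : (d < n.+1)%N by case/andP: Hd.
have Hunit : H A b M d xi q \in unitmx.
  rewrite unitmxE unitfE.
  have HQ : Qp R (Ordinal Hdn) (fcfg A b xi q) != 0.
    apply: Qp_neq0 => x Hx k Hk.
    exact: (Dm_indep Auniq Ane Hd Hsum Hv Hq Hgp Hsn Hx Hk).
  exact: (Ppoly_eval HP HQ).
exists (fun j => Dj A b M d xi q j), (fun j => Ij A b M d xi q j).
split; first by move=> j; apply: Ij_pos.
split; first by move=> j; apply: (Ray_edge Auniq Ane Hd Hsum Hv Hq Hunit (ltn_ord j)).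
split.
  move=> j j' Njj; apply: (Ray_distinct Auniq Ane Hd Hv Hq Hunit (ltn_ord j) (ltn_ord j')).
  by apply: contra Njj => /eqP E; apply/eqP/val_inj.
split; last exact: (sum_Dj Auniq Ane q Hv).
move=> E HE Hend; exact: (edge_is_ray Auniq Ane Hd Hsum Hv Hq Hunit HE Hend).
Qed.
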